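(* For all integers $n\ge 3$ and real numbers $a\ge1$, $x\in(0,\pi)$, we have $S_{n,a}(x)\ge S_{n-2,a}(x)$.
   Context: For a real number $a$ and integers $0\le m$, the binomial coefficient is $\binom{m+a}{m}=\frac{(a+1)(a+2)\cdots(a+m)}{m!}$ (equal to $1$ when $m=0$). For an integer $n\ge1$ and real $a$, $S_{n,a}(x)=\sum_{j=1}^n\binom{n+a-j}{n-j}\sin(jx)$. *)

(* Defs.v *)
From Stdlib Require Import Reals Lra Lia Factorial.
Open Scope R_scope.

Fixpoint rising_prod (a : R) (m : nat) : R :=
  match m with
  | O => 1
  | S k => rising_prod a k * (a + INR (S k))
  end.

(* gbinom a m = binom(m+a, m) = (a+1)(a+2)...(a+m)/m!  (= 1 when m = 0). *)
Definition gbinom (a : R) (m : nat) : R := rising_prod a m / INR (fact m).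

Definition S_na (n : nat) (a x : R) : R :=
  sum_f 1 n (fun j => gbinom a (n - j) * sin (INR j * x)).

(* Main.v *)
Require Import Defs.
From Stdlib Require Import Reals Lra Lia Factorial.
Open Scope R_scope.

Lemma rp_shift al k : rising_prod (al-1) (S k) = al * rising_prod al k.
Proof.
  induction k.
  - simpl. ring.
  - change (rising_prod (al-1) (S (S k))) with (rising_prod (al-1) (S k) * (al - 1 + INR (S (S k)))).
    rewrite IHk. change (rising_prod al (S k)) with (rising_prod al k * (al + INR (S k))). rewrite (S_INR (S k)). ring.
Qed.

Lemma pascal al k : gbinom al (S k) = gbinom al k + gbinom (al-1) (S k).
Proof.
  unfold gbinom. rewrite rp_shift.
  change (rising_prod al (S k)) with (rising_prod al k * (al + INR (S k))).
  change (fact (S k)) with (S k * fact k)%nat. rewrite mult_INR.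
  assert (INR (fact k) <> 0) by apply INR_fact_neq_0.
  assert (INR (S k) <> 0) by (rewrite S_INR; pose proof (pos_INR k); lra).
  field. auto.
Qed.

Lemma gb0 al : gbinom al 0 = 1.
Proof. unfold gbinom; simpl; field. Qed.

Lemma sum_first f n : sum_f_R0 f (S n) = f O + sum_f_R0 (fun i => f (S i)) n.
Proof. induction n. simpl; ring. change (sum_f_R0 f (S (S n))) with (sum_f_R0 f (S n) + f (S (S n))).
 rewrite IHn. simpl. ring. Qed.

Lemma sum_nonneg f n : (forall i, (i <= n)%nat -> 0 <= f i) -> 0 <= sum_f_R0 f n.
Proof. induction n; intros H; simpl. apply H; lia.
 assert (0 <= sum_f_R0 f n) by (apply IHn; intros; apply H; lia). assert (0 <= f (S n)) by (apply H; lia). lra. Qed.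

Lemma exch (f : nat -> nat -> R) m :
  sum_f_R0 (fun l => sum_f_R0 (fun j => f l j) l) m =
  sum_f_R0 (fun j => sum_f_R0 (fun t => f (m - t)%nat j) (m - j)) m.
Proof.
  induction m.
  - simpl. reflexivity.
  - change (sum_f_R0 (fun l => sum_f_R0 (fun j => f l j) l) (S m)) with
      (sum_f_R0 (fun l => sum_f_R0 (fun j => f l j) l) m + sum_f_R0 (fun j => f (S m) j) (S m)).
    rewrite IHm.
    change (sum_f_R0 (fun j => sum_f_R0 (fun t => f (S m - t)%nat j) (S m - j)) (S m)) with
      (sum_f_R0 (fun j => sum_f_R0 (fun t => f (S m - t)%nat j) (S m - j)) m +
       sum_f_R0 (fun t => f (S m - t)%nat (S m)) (S m - S m)).
    rewrite Nat.sub_diag. simpl (sum_f_R0 _ 0).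
    rewrite (sum_eq (fun j => sum_f_R0 (fun t => f (S m - t)%nat j) (S m - j))
                    (fun j => f (S m) j + sum_f_R0 (fun t => f (m - t)%nat j) (m - j))).
    + rewrite sum_plus. change (sum_f_R0 (fun j => f (S m) j) (S m)) with (sum_f_R0 (fun j => f (S m) j) m + f (S m) (S m)). replace (S m - 0)%nat with (S m) by lia. change (sum_f_R0 (fun j : nat => f (S m) j) m) with (sum_f_R0 (f (S m)) m). ring.
    + intros j Hj. replace (S m - j)%nat with (S (m - j)) by lia.
      rewrite sum_first. rewrite Nat.sub_0_r. reflexivity.
Qed.

Lemma G1 al k : sum_f_R0 (fun t => gbinom (al-1) t) k = gbinom al k.
Proof. induction k. cbn [sum_f_R0]. rewrite !gb0. ring.
 cbn [sum_f_R0]. rewrite IHk, (pascal al k). ring. Qed.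

Lemma Hconv a k : sum_f_R0 (fun t => gbinom (a-1-1) t * (INR k + 1 - INR t)) k = gbinom a k.
Proof.
  induction k.
  - cbn [sum_f_R0]. rewrite !gb0. simpl INR. ring.
  - cbn [sum_f_R0].
    rewrite (sum_eq _ (fun t => gbinom (a-1-1) t * (INR k + 1 - INR t) + gbinom (a-1-1) t)).
    + rewrite sum_plus, IHk, G1. rewrite (pascal a k), (pascal (a-1) k), <- (G1 (a-1) k). rewrite S_INR. ring.
    + intros i _. rewrite S_INR. ring.
Qed.

Lemma rp_nonneg a t : 1 <= a -> 0 <= rising_prod (a-1-1) t.
Proof. intros Ha. induction t. simpl; lra.
 change (rising_prod (a-1-1) (S t)) with (rising_prod (a-1-1) t * (a-1-1 + INR (S t))).
 rewrite S_INR. pose proof (pos_INR t). apply Rmult_le_pos; lra. Qed.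

Lemma e_nonneg a t : 1 <= a -> 0 <= gbinom (a-1-1) t.
Proof. intros Ha. unfold gbinom. apply Rmult_le_pos. apply rp_nonneg; auto.
 left. apply Rinv_0_lt_compat. apply lt_0_INR. apply lt_O_fact. Qed.

Definition w (j : nat) : R := match j with O => /2 | _ => 1 end.
Definition Dir x l := sum_f_R0 (fun j => w j * cos (INR j * x)) l.
Definition Fej x l := sum_f_R0 (fun j => w j * (INR l + 1 - INR j) * cos (INR j * x)) l.
Definition Kern a x m := sum_f_R0 (fun j => w j * gbinom a (m - j) * cos (INR j * x)) m.

Lemma Dir_id x l : 2 * (1 - cos x) * Dir x l = cos (INR l * x) - cos (INR (S l) * x).
Proof.
  induction l.
  - unfold Dir. simpl. rewrite Rmult_0_l, Rmult_1_l, cos_0. field.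
  - unfold Dir in *. change (sum_f_R0 (fun j => w j * cos (INR j * x)) (S l)) with
     (sum_f_R0 (fun j => w j * cos (INR j * x)) l + w (S l) * cos (INR (S l) * x)).
    rewrite Rmult_plus_distr_l, IHl. simpl (w (S l)).
    replace (INR (S (S l)) * x) with (INR (S l) * x + x) by (rewrite (S_INR (S l)); ring).
    replace (INR l * x) with (INR (S l) * x - x) by (rewrite (S_INR l); ring).
    rewrite cos_plus, cos_minus. ring.
Qed.

Lemma Fej_step x l : Fej x (S l) = Fej x l + Dir x (S l).
Proof.
  unfold Fej, Dir.
  change (sum_f_R0 (fun j => w j * (INR (S l) + 1 - INR j) * cos (INR j * x)) (S l)) with
    (sum_f_R0 (fun j => w j * (INR (S l) + 1 - INR j) * cos (INR j * x)) l + w (S l) * (INR (S l) + 1 - INR (S l)) * cos (INR (S l) * x)).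
  change (sum_f_R0 (fun j => w j * cos (INR j * x)) (S l)) with
    (sum_f_R0 (fun j => w j * cos (INR j * x)) l + w (S l) * cos (INR (S l) * x)).
  rewrite (sum_eq (fun j => w j * (INR (S l) + 1 - INR j) * cos (INR j * x))
     (fun j => w j * (INR l + 1 - INR j) * cos (INR j * x) + w j * cos (INR j * x))).
  - rewrite sum_plus. ring.
  - intros i _. rewrite S_INR. ring.
Qed.

Lemma Fej_id x l : 2 * (1 - cos x) * Fej x l = 1 - cos (INR (S l) * x).
Proof.
  induction l.
  - unfold Fej. simpl. rewrite Rmult_0_l, cos_0, Rmult_1_l. field.
  - rewrite Fej_step, Rmult_plus_distr_l, IHl, Dir_id. ring.
Qed.

Lemma Fej_nonneg x l : 0 < x < PI -> 0 <= Fej x l.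
Proof.
  intros Hx. pose proof (sin_gt_0 x (proj1 Hx) (proj2 Hx)).
  pose proof (sin2_cos2 x). pose proof (COS_bound x).
  assert (cos x < 1) by (unfold Rsqr in *; nra).
  pose proof (COS_bound (INR (S l) * x)). pose proof (Fej_id x l). nra.
Qed.

Lemma Kern_conv a x m :
  Kern a x m = sum_f_R0 (fun l => gbinom (a-1-1) (m-l) * Fej x l) m.
Proof.
  unfold Fej.
  rewrite (sum_eq (fun l => gbinom (a-1-1) (m-l) *
     sum_f_R0 (fun j => w j * (INR l + 1 - INR j) * cos (INR j * x)) l)
     (fun l => sum_f_R0 (fun j => (fun l j => gbinom (a-1-1) (m-l) * (w j * (INR l + 1 - INR j) * cos (INR j * x))) l j) l)).
  2:{ intros l _. rewrite scal_sum. apply sum_eq. intros; simpl; ring. }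
  rewrite exch. unfold Kern. apply sum_eq. intros j Hj.
  rewrite (sum_eq _ (fun t => (gbinom (a-1-1) t * (INR (m-j) + 1 - INR t)) * (w j * cos (INR j * x)))).
  - rewrite <- scal_sum, Hconv. ring.
  - intros t Ht. replace (m - (m - t))%nat with t by lia.
    rewrite (minus_INR m t) by lia. rewrite (minus_INR m j) by lia. ring.
Qed.

Lemma Kern_nonneg a x m : 1 <= a -> 0 < x < PI -> 0 <= Kern a x m.
Proof.
  intros Ha Hx. rewrite Kern_conv. apply sum_nonneg. intros.
  apply Rmult_le_pos. apply e_nonneg; auto. apply Fej_nonneg; auto.
Qed.

Definition v x (j : nat) : R := match j with O | S O => 0 | S (S k) => sin (INR (S k) * x) end.

Lemma prod_sum x j : 2 * sin x * (w j * cos (INR j * x)) = sin (INR (S j) * x) - v x j.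
Proof.
  destruct j as [|[|k]].
  - simpl. rewrite Rmult_0_l, cos_0, Rmult_1_l. field.
  - simpl w; simpl v. replace (INR 2 * x) with (x + x) by (simpl; ring).
    rewrite sin_plus. simpl INR. rewrite !Rmult_1_l. ring.
  - simpl w. unfold v.
    replace (INR (S (S (S k))) * x) with (INR (S (S k)) * x + x) by (rewrite (S_INR (S (S k))); ring).
    replace (INR (S k) * x) with (INR (S (S k)) * x - x) by (rewrite (S_INR (S k)); ring).
    rewrite sin_plus, sin_minus. ring.
Qed.

Lemma sum_f_1 N f : sum_f 1 (S N) f = sum_f_R0 (fun i => f (S i)) N.
Proof. unfold sum_f. replace (S N - 1)%nat with N by lia. apply sum_eq. intros; f_equal; lia. Qed.

Lemma main_id p a x : S_na (S (S (S p))) a x - S_na (S p) a x = 2 * sin x * Kern a x (S (S p)).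
Proof.
  unfold S_na, Kern. rewrite !sum_f_1. rewrite scal_sum.
  rewrite (sum_eq (fun i => w i * gbinom a (S (S p) - i) * cos (INR i * x) * (2 * sin x))
     (fun i => gbinom a (S (S p) - i) * sin (INR (S i) * x) - gbinom a (S (S p) - i) * v x i)).
  2:{ intros i _. transitivity (gbinom a (S (S p) - i) * (2 * sin x * (w i * cos (INR i * x)))); [ring|]. rewrite prod_sum. ring. }
  rewrite minus_sum.
  rewrite (sum_eq (fun i => gbinom a (S (S (S p)) - S i) * sin (INR (S i) * x))
                  (fun i => gbinom a (S (S p) - i) * sin (INR (S i) * x))) by (intros; f_equal).
  rewrite (sum_first (fun i => gbinom a (S (S p) - i) * v x i)).
  rewrite (sum_first (fun i => gbinom a (S (S p) - S i) * v x (S i))).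
  simpl (v x 0). simpl (v x 1).
  rewrite (sum_eq (fun i => gbinom a (S p - S i) * sin (INR (S i) * x))
                  (fun i => gbinom a (S (S p) - S (S i)) * v x (S (S i)))) by (intros; reflexivity).
  ring.
Qed.

Theorem lemma2p6 (n : nat) (a x : R) :
  (3 <= n)%nat -> 1 <= a -> 0 < x < PI ->
  S_na n a x >= S_na (n - 2) a x.
Proof.
  intros Hn Ha Hx.
  destruct n as [|[|[|p]]]; try lia.
  replace (S (S (S p)) - 2)%nat with (S p) by lia.
  pose proof (main_id p a x). pose proof (Kern_nonneg a x (S (S p)) Ha Hx).
  pose proof (sin_gt_0 x (proj1 Hx) (proj2 Hx)).
  assert (0 <= 2 * sin x * Kern a x (S (S p))) by (apply Rmult_le_pos; lra).
  lra.
Qed.
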